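(* Let $d\ge1$, $L\ge1$, $1\le q<d$. For every integer $T\ge(2L)^d$, $\mathbb{D}_{\mathrm{onl}}(\mathcal{H}_L)\ge(2L)^qT^{1-q/d}$ (with respect to the loss $\ell_q$). In particular $\mathbb{D}_{\mathrm{onl}}(\mathcal{H}_L)=\infty$.
   Context: $\mathcal{X}=[-1,1]^d$, $\mathcal{Y}=[0,1]$, $\mathcal{H}_L=\{h:\mathcal X\to[0,1]:|h(x)-h(x')|\le L\|x-x'\|_\infty\}$, loss $\ell_q(y,y')=|y-y'|^q$. Scaled Littlestone tree of depth $D\le\infty$: internal nodes $u\in\{0,1\}^{<D}$ labeled $x_u\in\mathcal X$, edges labeled $s_{u,0},s_{u,1}\in\mathcal{Y}$, gap $\gamma_u=\ell_q(s_{u,0},s_{u,1})$; realizable by $\mathcal{H}_L$ if for every branch $b$ and finite $n\le D$ some $h\in\mathcal{H}_L$ has $h(x_{b_{\le t}})=s_{b_{\le t},b_{t+1}}$ for $t<n$ ($b_{\le t}$ the length-$t$ prefix). $\mathbb{D}_{\mathrm{onl}}(\mathcal{H}_L)=\sup_{\mathcal T}\inf_b\sum_t\gamma_{b_{\le t}}$ over realizable trees and their branches. *)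

(* Defs.v *)
From HB Require Import structures.
From mathcomp Require Import all_boot all_order all_algebra.
From mathcomp Require Import all_classical all_reals all_analysis.
Set Implicit Arguments. Unset Strict Implicit. Unset Printing Implicit Defensive.
Import Order.TTheory GRing.Theory Num.Theory.
Local Open Scope classical_set_scope.
Local Open Scope ring_scope.

Section Defs.
Variables (R : realType) (d : nat).

Definition pt := 'I_d -> R.
Definition inX (x : pt) : Prop := forall i, -1 <= x i <= 1.
Definition inY (y : R) : Prop := 0 <= y <= 1.
Definition dist_inf (x x' : pt) : R := \big[Order.max/0]_(i < d) `|x i - x' i|.

Definition inHL (L : R) (h : pt -> R) : Prop :=
  (forall x, inX x -> inY (h x)) /\
  (forall x x', inX x -> inX x' -> `|h x - h x'| <= L * dist_inf x x').

Definition lossq (q : R) (y y' : R) : R := `|y - y'| `^ q.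

(* scaled Littlestone tree; depth None means D = oo.
   Nodes are bit sequences u with size u < D; node u is labelled x_u,
   edges out of u labelled s_{u,0}, s_{u,1}. *)
Record ltree := LTree {
  depth : option nat;
  node : seq bool -> pt;
  edge : seq bool -> bool -> R }.

Definition lt_depth (D : option nat) (k : nat) : Prop :=
  if D is Some n then (k < n)%N else True.
Definition le_depth (D : option nat) (k : nat) : Prop :=
  if D is Some n then (k <= n)%N else True.

Definition wf_tree (T : ltree) : Prop :=
  forall u, lt_depth (depth T) (size u) ->
    inX (node T u) /\ inY (edge T u false) /\ inY (edge T u true).

(* prefix b_{<= t} of length t of a branch b *)
Definition prefix (b : nat -> bool) (t : nat) : seq bool := mkseq b t.

Definition realizable (L : R) (T : ltree) : Prop :=
  forall (b : nat -> bool) (n : nat), le_depth (depth T) n ->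
    exists h, inHL L h /\
      forall t, (t < n)%N -> h (node T (prefix b t)) = edge T (prefix b t) (b t).

Definition gap (q : R) (T : ltree) (u : seq bool) : R :=
  lossq q (edge T u false) (edge T u true).

Definition branch_gain (q : R) (T : ltree) (b : nat -> bool) : \bar R :=
  match depth T with
  | Some n => (\sum_(t < n) gap q T (prefix b t))%:E
  | None => (\sum_(0 <= t <oo) (gap q T (prefix b t))%:E)%E
  end.

Definition D_onl (L q : R) : \bar R :=
  ereal_sup [set ereal_inf [set branch_gain q T b | b in [set: nat -> bool]]
            | T in [set T | wf_tree T /\ realizable L T]].

End Defs.

(* Main.v *)
Require Import Defs.
From HB Require Import structures.
From mathcomp Require Import all_boot all_order all_algebra.
From mathcomp Require Import all_classical all_reals all_analysis.
From mathcomp Require Import ring lra.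
Import Order.TTheory GRing.Theory Num.Theory.
Local Open Scope classical_set_scope.
Local Open Scope ring_scope.

Section Aux.
Variables (R : realType) (d : nat).

Lemma max_lip (a1 a2 b1 b2 c : R) :
  `|a1 - b1| <= c -> `|a2 - b2| <= c ->
  `|Order.max a1 a2 - Order.max b1 b2| <= c.
Proof.
rewrite !ler_norml => /andP[h1 h2] /andP[h3 h4].
rewrite !maxEle; case: (leP a1 a2) => ha; case: (leP b1 b2) => hb;
  apply/andP; split; lra.
Qed.

Lemma bigmax_lip (I : Type) (r : seq I) (P : pred I) (f g : I -> R) (c : R) :
  0 <= c -> (forall i, P i -> `|f i - g i| <= c) ->
  `|\big[Order.max/0]_(i <- r | P i) f i - \big[Order.max/0]_(i <- r | P i) g i| <= c.
Proof.
move=> c0 H; apply: (big_ind2 (fun a b => `|a - b| <= c)) => //.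
  by rewrite subrr normr0.
by move=> a1 b1 a2 b2; apply: max_lip.
Qed.

Lemma dist_ge0 (x y : pt R d) : 0 <= dist_inf x y.
Proof.
rewrite /dist_inf; elim/big_ind: _ => // a b ha hb.
by rewrite le_max ha.
Qed.

Lemma dist_ge_i (x y : pt R d) i : `|x i - y i| <= dist_inf x y.
Proof. exact: le_bigmax. Qed.

Lemma dist_le (x y : pt R d) c : 0 <= c -> (forall i, `|x i - y i| <= c) ->
  dist_inf x y <= c.
Proof. by move=> c0 H; apply: bigmax_le. Qed.

Lemma dist_sym (x y : pt R d) : dist_inf x y = dist_inf y x.
Proof. by apply: eq_bigr => i _; rewrite distrC. Qed.

Lemma dist_tri (x y z : pt R d) : dist_inf x z <= dist_inf x y + dist_inf y z.
Proof.
apply: dist_le; first by rewrite addr_ge0 // dist_ge0.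
move=> i; apply: le_trans (ler_distD (y i) _ _) _.
by apply: lerD; apply: dist_ge_i.
Qed.

Lemma dist_refl (x : pt R d) : dist_inf x x = 0.
Proof.
apply/le_anti; rewrite dist_ge0 andbT; apply: dist_le => // i.
by rewrite subrr normr0.
Qed.

Definition bump (L e : R) (p x : pt R d) : R := Order.max 0 (e - L * dist_inf x p).

Lemma bump_lip L e p x x' : 0 <= L ->
  `|bump L e p x - bump L e p x'| <= L * dist_inf x x'.
Proof.
move=> L0; have c0 : 0 <= L * dist_inf x x' by rewrite mulr_ge0 // dist_ge0.
apply: max_lip; first by rewrite subrr normr0.
have h1 := dist_tri x x' p.
have h2 := dist_tri x' x p.
rewrite (dist_sym x' x) in h2.
have -> : e - L * dist_inf x p - (e - L * dist_inf x' p) =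
   L * (dist_inf x' p - dist_inf x p) by ring.
rewrite normrM (ger0_norm L0); apply: ler_wpM2l => //.
rewrite ler_norml; apply/andP; split; lra.
Qed.

Lemma bump_le L e p x : 0 <= L -> 0 <= e -> bump L e p x <= e.
Proof.
move=> L0 e0; rewrite /bump ge_max e0 /=.
have := dist_ge0 x p => h; have : 0 <= L * dist_inf x p by rewrite mulr_ge0.
lra.
Qed.

Lemma bump_at L e p : 0 <= e -> bump L e p p = e.
Proof. by move=> e0; rewrite /bump dist_refl mulr0 subr0 max_r. Qed.

Lemma bump_far L e p x : e <= L * dist_inf x p -> bump L e p x = 0.
Proof. by move=> h; rewrite /bump max_l // subr_le0. Qed.

End Aux.
Arguments bump {R d}.

Section Grid.
Variables (R : realType) (d k : nat) (L : R).
Hypothesis k0 : (0 < k)%N.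
Hypothesis L1 : 1 <= L.
Hypothesis Lk : L <= k%:R.

Lemma L0 : 0 <= L. Proof. exact: le_trans ler01 L1. Qed.

Let F := {ffun 'I_d -> 'I_k.+1}.
Let e : R := L / k%:R.

Definition pgrid (f : F) : pt R d := fun i => -1 + 2 * (f i)%:R / k%:R.

Lemma kpos : 0 < k%:R :> R. Proof. by rewrite ltr0n. Qed.

Lemma pgrid_inX f : inX (pgrid f).
Proof.
move=> i; rewrite /pgrid.
have h0 : 0 <= 2 * (f i)%:R / k%:R :> R by rewrite divr_ge0 // mulr_ge0.
have h1 : 2 * (f i)%:R / k%:R <= 2 :> R.
  rewrite ler_pdivrMr ?kpos //; apply: ler_wpM2l => //.
  by rewrite ler_nat -ltnS.
apply/andP; split; lra.
Qed.

Lemma nat_sep (a b : nat) : a != b -> 1 <= `|a%:R - b%:R : R|.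
Proof.
case: (ltngtP a b) => // h _.
  rewrite distrC ger0_norm; last by rewrite subr_ge0 ler_nat ltnW.
  by rewrite lerBrDr addrC natr1 ler_nat.
rewrite ger0_norm; last by rewrite subr_ge0 ler_nat ltnW.
by rewrite lerBrDr addrC natr1 ler_nat.
Qed.

Lemma pgrid_sep f g : f != g -> 2 / k%:R <= dist_inf (pgrid f) (pgrid g).
Proof.
move=> fg.
have [i hi] : exists i, f i != g i.
  case: (pselect (exists i, f i != g i)) => // H; exfalso.
  move/negP: fg; apply; apply/eqP/ffunP => i; apply/eqP/negPn/negP => ne.
  by apply: H; exists i.
apply: le_trans (dist_ge_i _ _ _ _ i); rewrite /pgrid.
have -> : -1 + 2 * (f i)%:R / k%:R - (-1 + 2 * (g i)%:R / k%:R) =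
   2 / k%:R * ((f i)%:R - (g i)%:R) :> R by field; rewrite gt_eqF ?kpos.
rewrite normrM ger0_norm; last by rewrite divr_ge0.
rewrite -{1}(mulr1 (2 / k%:R)); apply: ler_wpM2l; first by rewrite divr_ge0.
by apply: nat_sep; rewrite (inj_eq val_inj).
Qed.

Let f0 : F := [ffun _ => ord0].
Definition P (t : nat) : pt R d := pgrid (nth f0 (enum F) t).

Lemma P_sep t s : (t < #|F|)%N -> (s < #|F|)%N -> t != s ->
  2 / k%:R <= dist_inf (P t) (P s).
Proof.
move=> ht hs ts; apply: pgrid_sep.
by rewrite nth_uniq ?enum_uniq // -cardE.
Qed.

Definition hsel (b : nat -> bool) (n : nat) (x : pt R d) : R :=
  \big[Order.max/0]_(t < n) (if b t then bump L e (P t) x else 0).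

Lemma e_ge0 : 0 <= e. Proof. by rewrite divr_ge0 ?ler0n ?L0. Qed.
Lemma e_le1 : e <= 1. Proof. by rewrite ler_pdivrMr ?kpos // mul1r. Qed.

Lemma hsel_at b n s : (s < n)%N -> (n <= #|F|)%N ->
  hsel b n (P s) = if b s then e else 0.
Proof.
move=> sn nF; apply/le_anti/andP; split.
  apply: bigmax_le; first by case: (b s); rewrite ?e_ge0.
  move=> t _; case: (boolP (val t == s)) => [/eqP ts|ts].
    by rewrite ts; case: (b s) => //; rewrite bump_at // e_ge0.
  have -> : (if b t then bump L e (P t) (P s) else 0) = 0.
    case: (b t) => //; apply: bump_far.
    have := @P_sep s t (leq_trans sn nF) (leq_trans (ltn_ord t) nF).
    rewrite eq_sym => /(_ ts) h.
    apply: le_trans (_ : L * (2 / k%:R) <= _); last first.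
      by apply: ler_wpM2l => //; exact: L0.
    rewrite /e ler_pdivrMr ?kpos // -mulrA divfK ?gt_eqF ?kpos //.
    by rewrite ler_peMr ?L0 // ler1n.
  by case: (b s); rewrite ?e_ge0.
rewrite /hsel; apply: le_trans (le_bigmax _ _ (Ordinal sn)) => /=.
by case: (b s) => //; rewrite bump_at // e_ge0.
Qed.

Lemma hsel_HL b n : inHL L (hsel b n).
Proof.
split.
  move=> x _; apply/andP; split.
    rewrite /hsel; elim/big_ind: _ => // [a c ha hc|t _]; first by rewrite le_max ha.
    by case: (b t); rewrite // /bump le_max lexx.
  apply: bigmax_le => //.
  move=> t _; case: (b t); last by [].
  apply: le_trans (bump_le _ _ _ _ _ _ L0 e_ge0) e_le1.
move=> x x' _ _; apply: bigmax_lip.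
  by rewrite mulr_ge0 ?dist_ge0 ?L0.
move=> t _; case: (b t); last by rewrite subrr normr0 mulr_ge0 ?dist_ge0 ?L0.
exact: bump_lip L0.
Qed.

Definition gtree : ltree R d :=
  LTree (Some #|F|) (fun u => P (size u)) (fun u bb => if bb then e else 0).

Lemma gtree_wf : wf_tree gtree.
Proof.
move=> u _; split; first exact: pgrid_inX.
by rewrite /inY /= lexx ler01 e_ge0 e_le1.
Qed.

Lemma gtree_real : realizable L gtree.
Proof.
move=> b n /= hn; exists (hsel b n); split; first exact: hsel_HL.
by move=> t tn; rewrite /prefix size_mkseq hsel_at.
Qed.

Lemma gtree_gain (q : R) b : branch_gain q gtree b = (#|F|%:R * e `^ q)%:E.
Proof.
rewrite /branch_gain /=; congr (_%:E).
rewrite (eq_bigr (fun _ => e `^ q)); last first.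
  by move=> t _; rewrite /gap /lossq /= sub0r normrN ger0_norm ?e_ge0.
by rewrite sumr_const card_ord mulr_natl.
Qed.

Lemma gtree_bound (q : R) : 0 <= q ->
  (k%:R `^ d%:R * k%:R `^ (- q) <= #|F|%:R * e `^ q).
Proof.
move=> q0; apply: ler_pM.
- by rewrite powR_ge0.
- by rewrite powR_ge0.
- rewrite card_ffun !card_ord powR_mulrn ?ler0n // -natrX ler_nat.
  by case: (posnP d) => [->|dp]; rewrite ?expn0 ?leq_exp2r.
- have -> : k%:R `^ (- q) = (k%:R `^ (-1)) `^ q by rewrite -powRrM mulN1r.
  apply: ge0_ler_powR => //; rewrite ?nnegrE ?e_ge0 ?powR_ge0 //.
  rewrite powRN powRr1 ?ler0n // /e -[X in X <= _]mul1r.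
  by apply: ler_wpM2r => //; rewrite invr_ge0 ler0n.
Qed.
End Grid.

Lemma unbounded (R : realType) (d : nat) (L q : R) :
  1 <= L -> 1 <= q -> q < d%:R -> forall M : R,
  exists T : ltree R d, (wf_tree T /\ realizable L T) /\
    forall b, (M%:E <= branch_gain q T b)%E.
Proof.
move=> L1 q1 qd M.
set r := d%:R - q.
have r0 : 0 < r by rewrite /r subr_gt0.
set M' := Num.max M 1.
have M'1 : 1 <= M' by rewrite le_max lexx orbT.
have M'0 : 0 <= M' := le_trans ler01 M'1.
set A := M' `^ (r^-1).
have A0 : 0 <= A by rewrite powR_ge0.
have L0 : 0 <= L := le_trans ler01 L1.
set k := Num.Def.archi_bound (A + L).
have hk : A + L < k%:R by apply: archi_boundP; rewrite addr_ge0.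
have Lk : L <= k%:R by apply: ltW; apply: le_lt_trans hk; rewrite lerDr.
have Ak : A <= k%:R by apply: ltW; apply: le_lt_trans hk; rewrite lerDl.
have k0 : (0 < k)%N by rewrite -(ltr0n R); apply: lt_le_trans Lk; apply: lt_le_trans L1.
exists (gtree R d k L); split; first by split; [exact: gtree_wf | exact: gtree_real].
move=> b; rewrite gtree_gain // lee_fin.
apply: le_trans (@gtree_bound R d k L L1 q (le_trans ler01 q1)).
have kne : k%:R != 0 :> R by rewrite pnatr_eq0 -lt0n.
rewrite -powRD; last by rewrite kne implybT.
rewrite -/r; apply: le_trans (_ : A `^ r <= _).
  rewrite /A -powRrM mulVf ?gt_eqF // powRr1 //.
  by rewrite /M' le_max lexx.
apply: ge0_ler_powR; rewrite ?nnegrE ?ler0n //; exact: ltW.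
Qed.

Theorem theoremA8 (R : realType) (d : nat) (L q : R) :
  (1 <= d)%N -> 1 <= L -> 1 <= q -> q < d%:R ->
  (forall T : nat, (2 * L) `^ d%:R <= T%:R ->
     (((2 * L) `^ q * T%:R `^ (1 - q / d%:R))%:E <= D_onl d L q)%E)
  /\ D_onl d L q = +oo%E.
Proof.
move=> d1 L1 q1 qd.
have Hinf : D_onl d L q = +oo%E.
  have key : forall M : R, (M%:E <= D_onl d L q)%E.
    move=> M; have [T [HT Hb]] := @unbounded R d L q L1 q1 qd M.
    apply: le_trans (ereal_sup_ubound _); last by exists T.
    by apply/ereal_infP => y [b _ <-]; apply: Hb.
  case E: (D_onl d L q) => [x| |] //.
    have h := key (x + 1)%R. rewrite E lee_fin in h. exfalso; lra.
  by have := key 0; rewrite E.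
split => // T _; rewrite Hinf; exact: leey.
Qed.
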